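(* Consider Model A with $\delta>-1$. There exists a constant $C'>0$ (depending only on $\delta$) such that $$\bigl|\mathbf E(N_{>k}(n))-np_{>k}\bigr|\le C'\qquad\text{for all } n\ge1,\ k\ge1.$$
   Context: Model A (with $\delta>-1$): $G(1)$ consists of a single node $v_1$ with a self loop (so $v_1$ has degree 2; a self loop contributes 2 to the degree). For $n\ge1$, given $G(n)$ (nodes $v_1,\dots,v_n$, $n$ edges), $G(n+1)$ is obtained by adding a new node $v_{n+1}$ and one edge joining $v_{n+1}$ to an existing node $v_i$, $1\le i\le n$, chosen with probability $\frac{D_i(n)+\delta}{(2+\delta)n}$, where $D_i(n)$ is the degree of $v_i$ in $G(n)$. $N_{>k}(n):=\#\{1\le i\le n: D_i(n)>k\}$ for $k\ge1$, $N_{>0}(n):=n$. For $k\ge0$, $$p_{>k}:=\frac{\Gamma(k+1+\delta)\,\Gamma(3+2\delta)}{\Gamma(k+3+2\delta)\,\Gamma(1+\delta)}.$$ *)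

(* Defs.v *)
From Stdlib Require Import Reals List Arith.
Import ListNotations.
Open Scope R_scope.

(* Model A is a Markov chain whose state relevant to N_{>k} is the degree
   sequence [D_1(n); ...; D_n(n)] of G(n).  We represent the law of G(n)
   exactly as a finite list of (probability, degree sequence) outcomes. *)

Fixpoint incr_at (i : nat) (l : list nat) : list nat :=
  match l, i with
  | [], _ => []
  | d :: l', O => S d :: l'
  | d :: l', S i' => d :: incr_at i' l'
  end.

(* one step G(n) -> G(n+1): new node v_{n+1} (degree 1) attaches to v_{i+1}
   with probability (D_{i+1}(n)+delta)/((2+delta) n), where n = length ds *)
Definition modelA_step (delta : R) (o : R * list nat) : list (R * list nat) :=
  let (p, ds) := o in
  map (fun i => (p * ((INR (nth i ds O) + delta) / ((2 + delta) * INR (length ds))),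
                 incr_at i ds ++ [1%nat]))
      (seq 0 (length ds)).

(* modelA_law delta m = law of the degree sequence of G(m+1);
   G(1) = single node with a self loop, degree 2. *)
Fixpoint modelA_law (delta : R) (m : nat) : list (R * list nat) :=
  match m with
  | O => [(1, [2%nat])]
  | S m' => flat_map (modelA_step delta) (modelA_law delta m')
  end.

Definition expect (delta : R) (n : nat) (f : list nat -> R) : R :=
  fold_right (fun o acc => fst o * f (snd o) + acc) 0 (modelA_law delta (n - 1)).

Definition N_gt (k : nat) (ds : list nat) : R :=
  INR (length (filter (fun d => Nat.ltb k d) ds)).

(* p_{>k} = Gamma(k+1+delta) Gamma(3+2delta) / (Gamma(k+3+2delta) Gamma(1+delta))
   written via Gamma(x+k)/Gamma(x) = prod_{j<k} (x+j)  (x = 1+delta > 0,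
   x = 3+2delta > 0); Stdlib has no Gamma function. *)
Fixpoint p_gt (delta : R) (k : nat) : R :=
  match k with
  | O => 1
  | S k' => p_gt delta k' * ((1 + delta + INR k') / (3 + 2 * delta + INR k'))
  end.

(* Main.v *)
Require Import Defs.
From Stdlib Require Import Reals List Arith.
From Stdlib Require Import Lra Lia Psatz.
Import ListNotations.
Open Scope R_scope.

Definition Ex (f : list nat -> R) (l : list (R * list nat)) : R :=
  fold_right (fun o acc => fst o * f (snd o) + acc) 0 l.

Definition sumR (g : nat -> R) (s : list nat) : R :=
  fold_right (fun i acc => g i + acc) 0 s.

Definition lsum (g : nat -> R) (s : list nat) : R :=
  fold_right (fun d acc => g d + acc) 0 s.

Definition nsum (l : list nat) : nat := fold_right plus 0%nat l.

Definition cnt (k : nat) (l : list nat) : nat := length (filter (fun d => Nat.ltb k d) l).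
Definition ceq (k : nat) (l : list nat) : nat := length (filter (fun d => Nat.eqb d k) l).

Definition Wt (delta : R) (ds : list nat) (i : nat) : R :=
  (INR (nth i ds O) + delta) / ((2 + delta) * INR (length ds)).

Definition Tf (delta : R) (f : list nat -> R) (ds : list nat) : R :=
  sumR (fun i => Wt delta ds i * f (incr_at i ds ++ [1%nat])) (seq 0 (length ds)).

Lemma Ex_app f l1 l2 : Ex f (l1 ++ l2) = Ex f l1 + Ex f l2.
Proof. induction l1 as [|a l1 IH]; simpl; [lra|]. rewrite IH; ring. Qed.

Lemma Ex_map f p (W : nat -> R) (N : nat -> list nat) s :
  Ex f (map (fun i => (p * W i, N i)) s) = p * sumR (fun i => W i * f (N i)) s.
Proof. induction s as [|a s IH]; simpl; [ring|]. rewrite IH; ring. Qed.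

Lemma Ex_flat_map delta f l :
  Ex f (flat_map (modelA_step delta) l) = Ex (Tf delta f) l.
Proof.
  induction l as [|[p ds] l IH]; simpl; [reflexivity|].
  rewrite Ex_app, IH. unfold modelA_step. rewrite Ex_map. reflexivity.
Qed.

Lemma Ex_ext_in f g l : (forall o, In o l -> f (snd o) = g (snd o)) -> Ex f l = Ex g l.
Proof.
  induction l as [|a l IH]; intros H; simpl; [reflexivity|].
  rewrite H by (left; reflexivity). rewrite IH; [reflexivity|].
  intros o Ho; apply H; right; exact Ho.
Qed.

Lemma Ex_lin f g c l :
  Ex (fun ds => f ds + c * (g ds - f ds)) l = Ex f l + c * (Ex g l - Ex f l).
Proof. induction l as [|a l IH]; simpl; [ring|]. rewrite IH; ring. Qed.

Lemma Ex_scal f c l : Ex (fun ds => c * f ds) l = c * Ex f l.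
Proof. induction l as [|a l IH]; simpl; [ring|]. rewrite IH; ring. Qed.

Lemma Ex_zero l : Ex (fun _ => 0) l = 0.
Proof. induction l as [|a l IH]; simpl; [ring|]. rewrite IH; ring. Qed.

Lemma sumR_ext_in g h s : (forall i, In i s -> g i = h i) -> sumR g s = sumR h s.
Proof.
  induction s as [|a s IH]; intros H; simpl; [reflexivity|].
  rewrite H by (left; reflexivity). rewrite IH; [reflexivity|].
  intros o Ho; apply H; right; exact Ho.
Qed.

Lemma sumR_shift h s n : sumR h (seq (S s) n) = sumR (fun i => h (S i)) (seq s n).
Proof.
  revert s; induction n as [|n IH]; intros s; simpl; [reflexivity|].
  rewrite IH; reflexivity.
Qed.

Lemma sumR_nth (g : nat -> R) ds :
  sumR (fun i => g (nth i ds O)) (seq 0 (length ds)) = lsum g ds.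
Proof.
  induction ds as [|a ds IH]; simpl; [reflexivity|].
  rewrite sumR_shift. simpl. rewrite IH. reflexivity.
Qed.

Lemma incr_length i l : length (incr_at i l) = length l.
Proof. revert i; induction l as [|a l IH]; intros [|i]; simpl; auto. Qed.

Lemma incr_nsum i l : (i < length l)%nat -> nsum (incr_at i l) = S (nsum l).
Proof.
  revert i; induction l as [|a l IH]; intros [|i] Hi; simpl in *; try lia.
  rewrite IH by lia. lia.
Qed.

Lemma nsum_app l1 l2 : nsum (l1 ++ l2) = (nsum l1 + nsum l2)%nat.
Proof. induction l1; simpl; lia. Qed.

Lemma incr_Forall b i l : Forall (fun d => 1 <= d <= b)%nat l ->
  Forall (fun d => 1 <= d <= S b)%nat (incr_at i l).
Proof.
  revert i; induction l as [|a l IH]; intros [|i] H; simpl; auto;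
  inversion H; subst; constructor; try lia; auto.
  eapply Forall_impl; [|eassumption]. simpl; intros; lia.
Qed.

Lemma cnt_incr k i l : (i < length l)%nat ->
  cnt k (incr_at i l) = (cnt k l + (if Nat.eqb (nth i l O) k then 1 else 0))%nat.
Proof.
  unfold cnt. revert i; induction l as [|a l IH]; intros [|i] Hi; simpl in *; try lia.
  - destruct (Nat.ltb_spec k (S a)), (Nat.ltb_spec k a), (Nat.eqb_spec a k); simpl; lia.
  - destruct (Nat.ltb k a); simpl; rewrite IH by lia; lia.
Qed.

Lemma cnt_app1 k l : (1 <= k)%nat -> cnt k (l ++ [1%nat]) = cnt k l.
Proof.
  intros Hk. unfold cnt. rewrite filter_app, length_app. simpl.
  destruct (Nat.ltb_spec k 1); simpl; lia.
Qed.

Lemma cnt_pred k l : (1 <= k)%nat -> cnt (k - 1) l = (cnt k l + ceq k l)%nat.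
Proof.
  intros Hk. unfold cnt, ceq. induction l as [|a l IH]; simpl; [reflexivity|].
  destruct (Nat.ltb_spec (k-1) a), (Nat.ltb_spec k a), (Nat.eqb_spec a k); simpl; lia.
Qed.

Lemma cnt0 l : Forall (fun d => 1 <= d)%nat l -> cnt 0 l = length l.
Proof.
  unfold cnt. induction l as [|a l IH]; intros H; simpl; [reflexivity|].
  inversion H; subst. destruct (Nat.ltb_spec 0 a); simpl; [|lia]. rewrite IH; auto.
Qed.

Lemma cnt_big k l : Forall (fun d => d <= k)%nat l -> cnt k l = O.
Proof.
  unfold cnt. induction l as [|a l IH]; intros H; simpl; [reflexivity|].
  inversion H; subst. destruct (Nat.ltb_spec k a); simpl; [lia|]. auto.
Qed.

Lemma N_gt_incr k i l : (1 <= k)%nat -> (i < length l)%nat ->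
  N_gt k (incr_at i l ++ [1%nat]) = N_gt k l + (if Nat.eqb (nth i l O) k then 1 else 0).
Proof.
  intros Hk Hi. unfold N_gt. fold (cnt k (incr_at i l ++ [1%nat])). fold (cnt k l).
  rewrite cnt_app1, cnt_incr by assumption. rewrite plus_INR.
  destruct (Nat.eqb (nth i l O) k); simpl; ring.
Qed.

Lemma lsum_main delta r c k l :
  lsum (fun d => (INR d + delta) * r * (c + if Nat.eqb d k then 1 else 0)) l =
  (INR (nsum l) + INR (length l) * delta) * r * c + (INR k + delta) * r * INR (ceq k l).
Proof.
  unfold ceq. induction l as [|a l IH]; cbn -[INR]; [simpl; ring|].
  fold (lsum (fun d => (INR d + delta) * r * (c + if Nat.eqb d k then 1 else 0)) l).
  rewrite IH. destruct (Nat.eqb_spec a k); cbn -[INR].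
  - subst. change (fold_right Init.Nat.add 0%nat l) with (nsum l).
    rewrite plus_INR, !S_INR. ring.
  - change (fold_right Init.Nat.add 0%nat l) with (nsum l).
    rewrite plus_INR, S_INR. ring.
Qed.

Lemma lsum_one delta r l :
  lsum (fun d => (INR d + delta) * r * 1) l = (INR (nsum l) + INR (length l) * delta) * r.
Proof.
  induction l as [|a l IH]; cbn -[INR]; [simpl; ring|].
  fold (lsum (fun d => (INR d + delta) * r * 1) l).
  change (fold_right Init.Nat.add 0%nat l) with (nsum l).
  rewrite IH, plus_INR, S_INR. ring.
Qed.

Definition Inv (m : nat) (ds : list nat) : Prop :=
  length ds = S m /\ nsum ds = (2 * S m)%nat /\ Forall (fun d => 1 <= d <= S (S m))%nat ds.

Lemma Inv_law delta m o : In o (modelA_law delta m) -> Inv m (snd o).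
Proof.
  revert o; induction m as [|m IH]; intros o Ho.
  - simpl in Ho. destruct Ho as [<-|[]]. simpl. repeat split; auto.
  - simpl in Ho. apply in_flat_map in Ho. destruct Ho as [[p ds] [H1 H2]].
    apply IH in H1. simpl in H1. destruct H1 as [HL [HS HF]].
    unfold modelA_step in H2. apply in_map_iff in H2. destruct H2 as [i [<- Hi]].
    apply in_seq in Hi. simpl. repeat split.
    + rewrite length_app, incr_length. simpl. lia.
    + rewrite nsum_app, incr_nsum by lia. simpl. lia.
    + apply Forall_app. split.
      * apply incr_Forall. exact HF.
      * constructor; [lia|constructor].
Qed.

Lemma Tf_one delta m ds : -1 < delta -> Inv m ds -> Tf delta (fun _ => 1) ds = 1.
Proof.
  intros Hd [HL [HS HF]]. unfold Tf.
  transitivity (lsum (fun d => (INR d + delta) * / ((2 + delta) * INR (length ds)) * 1) ds).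
  { rewrite <- (sumR_nth _ ds). apply sumR_ext_in. intros i _. cbv beta. unfold Wt. unfold Rdiv. reflexivity. }
  rewrite lsum_one, HS, HL, mult_INR. simpl (INR 2).
  assert (0 < INR (S m)) by (apply lt_0_INR; lia). field. split; lra.
Qed.

Lemma Tf_N delta m k ds : -1 < delta -> (1 <= k)%nat -> Inv m ds ->
  Tf delta (N_gt k) ds = N_gt k ds +
     (INR k + delta) / ((2 + delta) * INR (S m)) * (N_gt (k - 1) ds - N_gt k ds).
Proof.
  intros Hd Hk [HL [HS HF]]. unfold Tf.
  transitivity (lsum (fun d => (INR d + delta) * / ((2 + delta) * INR (length ds)) *
      (N_gt k ds + if Nat.eqb d k then 1 else 0)) ds).
  { rewrite <- (sumR_nth _ ds). apply sumR_ext_in. intros i Hi. apply in_seq in Hi. cbv beta.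
    unfold Wt. unfold Rdiv. rewrite N_gt_incr by lia. reflexivity. }
  rewrite lsum_main, HS, HL.
  unfold N_gt. fold (cnt k ds). fold (cnt (k-1) ds). rewrite cnt_pred by exact Hk.
  rewrite mult_INR, plus_INR. simpl (INR 2).
  assert (0 < INR (S m)) by (apply lt_0_INR; lia). field. split; lra.
Qed.

Lemma prob_one delta m : -1 < delta -> Ex (fun _ => 1) (modelA_law delta m) = 1.
Proof.
  intros Hd. induction m as [|m IH]; simpl; [ring|].
  rewrite Ex_flat_map. transitivity (Ex (fun _ => 1) (modelA_law delta m)); [|exact IH].
  apply Ex_ext_in. intros o Ho. apply (Tf_one delta m); auto. eapply Inv_law; eauto.
Qed.

Lemma E_step delta m k : -1 < delta -> (1 <= k)%nat ->
  Ex (N_gt k) (modelA_law delta (S m)) =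
  Ex (N_gt k) (modelA_law delta m) + (INR k + delta) / ((2 + delta) * INR (S m)) *
     (Ex (N_gt (k-1)) (modelA_law delta m) - Ex (N_gt k) (modelA_law delta m)).
Proof.
  intros Hd Hk. simpl (modelA_law delta (S m)). rewrite Ex_flat_map.
  rewrite <- Ex_lin. apply Ex_ext_in. intros o Ho.
  apply Tf_N; auto. eapply Inv_law; eauto.
Qed.

Lemma E_zero delta m : -1 < delta -> Ex (N_gt 0) (modelA_law delta m) = INR (S m).
Proof.
  intros Hd. transitivity (Ex (fun ds => INR (S m) * 1) (modelA_law delta m)).
  - apply Ex_ext_in. intros o Ho. apply Inv_law in Ho. destruct Ho as [HL [_ HF]].
    unfold N_gt. fold (cnt 0 (snd o)). rewrite cnt0, HL; [ring|].
    eapply Forall_impl; [|eassumption]. simpl; intros; lia.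
  - rewrite Ex_scal, prob_one by exact Hd. ring.
Qed.

Lemma E_big delta m k : (S (S m) <= k)%nat -> Ex (N_gt k) (modelA_law delta m) = 0.
Proof.
  intros Hk. rewrite <- (Ex_zero (modelA_law delta m)). apply Ex_ext_in.
  intros o Ho. apply Inv_law in Ho. destruct Ho as [_ [_ HF]].
  unfold N_gt. fold (cnt k (snd o)). rewrite cnt_big; [reflexivity|].
  eapply Forall_impl; [|eassumption]. simpl; intros; lia.
Qed.

Lemma p_pos delta k : -1 < delta -> 0 < p_gt delta k.
Proof.
  intros Hd. induction k as [|k IH]; simpl; [lra|].
  assert (0 <= INR k) by apply pos_INR.
  apply Rmult_lt_0_compat; auto. apply Rdiv_lt_0_compat; lra.
Qed.

Lemma p_bound delta k : -1 < delta -> (INR k + 1) * p_gt delta k <= 1.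
Proof.
  intros Hd. induction k as [|k IH]; [simpl; lra|].
  cbn [p_gt]. rewrite S_INR. set (x := INR k) in *. assert (0 <= x) by apply pos_INR.
  set (p := p_gt delta k) in *. assert (0 < p) by (apply p_pos; exact Hd).
  set (q := (1 + delta + x) / (3 + 2 * delta + x)).
  assert (Hq : q * (3 + 2 * delta + x) = 1 + delta + x) by (unfold q; field; lra).
  assert (H2 : (x + 1 + 1) * q <= x + 1).
  { apply Rmult_le_reg_r with (3 + 2 * delta + x); [lra|].
    rewrite Rmult_assoc, Hq. nra. }
  nra.
Qed.

Lemma p_rec delta k : -1 < delta ->
  (2 + delta) * p_gt delta (S k) = (INR (S k) + delta) * (p_gt delta k - p_gt delta (S k)).
Proof.
  intros Hd. simpl p_gt. rewrite S_INR. assert (0 <= INR k) by apply pos_INR.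
  field. lra.
Qed.

Lemma Rabs_inv x a : Rabs x <= a -> -a <= x <= a.
Proof. unfold Rabs; destruct (Rcase_abs x); lra. Qed.

Lemma main_bound delta m k : -1 < delta ->
  Rabs (Ex (N_gt k) (modelA_law delta m) - INR (S m) * p_gt delta k) <= 1.
Proof.
  intros Hd. revert k. induction m as [|m IH]; intros k.
  - simpl. unfold N_gt. simpl.
    assert (0 < p_gt delta k) by (apply p_pos; exact Hd).
    assert ((INR k + 1) * p_gt delta k <= 1) by (apply p_bound; exact Hd).
    assert (0 <= INR k) by apply pos_INR.
    assert (p_gt delta k <= 1) by nra.
    apply Rabs_le. destruct (Nat.ltb k 2); simpl; lra.
  - destruct k as [|k'].
    + rewrite E_zero by exact Hd. simpl p_gt. apply Rabs_le. lra.
    + assert (HxS : 0 <= INR k') by apply pos_INR.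
      assert (HL : 1 <= INR (S m)) by (apply (le_INR 1); lia).
      rewrite (S_INR (S m)).
      destruct (le_lt_dec k' (S m)) as [Hsmall|Hbig].
      * rewrite E_step by (exact Hd || lia).
        replace (S k' - 1)%nat with k' by lia.
        pose proof (Rabs_inv _ _ (IH (S k'))) as H1.
        pose proof (Rabs_inv _ _ (IH k')) as H2.
        pose proof (p_rec delta k' Hd) as Hp.
        set (L := INR (S m)) in *.
        set (Ek := Ex (N_gt (S k')) (modelA_law delta m)) in *.
        set (Ek1 := Ex (N_gt k') (modelA_law delta m)) in *.
        set (pk := p_gt delta (S k')) in *. set (pk1 := p_gt delta k') in *.
        rewrite S_INR in *.
        assert (Hkm : INR k' <= L) by (unfold L; apply le_INR; lia).
        set (t := (INR k' + 1 + delta) / ((2 + delta) * L)).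
        assert (Ht : t * ((2 + delta) * L) = INR k' + 1 + delta) by (unfold t; field; lra).
        assert (Ht0 : 0 <= t).
        { unfold t, Rdiv. apply Rmult_le_pos; [lra|]. left; apply Rinv_0_lt_compat. nra. }
        assert (Ht1 : t <= 1).
        { apply Rmult_le_reg_r with ((2 + delta) * L); [nra|]. rewrite Ht. nra. }
        assert (HtL : t * L * (pk1 - pk) = pk).
        { apply Rmult_eq_reg_l with (2 + delta); [|lra].
          rewrite Hp. replace ((2 + delta) * (t * L * (pk1 - pk))) with
             ((t * ((2 + delta) * L)) * (pk1 - pk)) by ring. rewrite Ht. ring. }
        assert (Heq : Ek + t * (Ek1 - Ek) - (L + 1) * pk =
                      (1 - t) * (Ek - L * pk) + t * (Ek1 - L * pk1)).
        { replace (Ek + t * (Ek1 - Ek) - (L + 1) * pk) with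
            ((1 - t) * (Ek - L * pk) + t * (Ek1 - L * pk1) + (t * L * (pk1 - pk) - pk)) by ring.
          rewrite HtL. ring. }
        rewrite Heq.
        apply Rabs_le. nra.
      * rewrite E_big by lia.
        assert (H0 : 0 < p_gt delta (S k')) by (apply p_pos; exact Hd).
        pose proof (p_bound delta (S k') Hd) as Hb.
        rewrite S_INR in Hb.
        assert (Hkm : INR (S m) + 1 <= INR k' + 1 + 1).
        { rewrite <- S_INR, <- S_INR, <- S_INR. apply le_INR. lia. }
        apply Rabs_le. nra.
Qed.

Theorem mainTheorem7 (delta : R) (hdelta : -1 < delta) :
  exists C' : R, 0 < C' /\
    forall n k : nat, (1 <= n)%nat -> (1 <= k)%nat ->
      Rabs (expect delta n (N_gt k) - INR n * p_gt delta k) <= C'.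
Proof.
  exists 1. split; [lra|]. intros n k Hn Hk.
  destruct n as [|m]; [lia|]. unfold expect.
  replace (S m - 1)%nat with m by lia.
  apply (main_bound delta m k hdelta).
Qed.
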